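(* Consider a trial-offer market with social influence in which product $i$ is permanently displayed at a position of visibility $v_i>0$, with initial appeals $A_i>0$ and qualities $q_i\in[0,1]$ ($1\le i\le n$). Write $\hat q_i=v_iq_i$ and suppose there is $1\le j<n$ and numbers $\hat q^+>\hat q^-\ge 0$ with $\hat q_1=\cdots=\hat q_j=\hat q^+$ and $\hat q_{j+1}=\cdots=\hat q_n=\hat q^-$. Then almost surely the total market share of products $j+1,\dots,n$, namely $\frac{\sum_{i=j+1}^n d_{i,t}}{\sum_{i=1}^n d_{i,t}}$, converges to $0$ as $t\to\infty$.
   Context: Dynamic market: $d_{i,t}$ is the number of purchases of product $i$ before step $t$ ($d_{i,1}=0$), $a_{i,t}=A_i+d_{i,t}$. At step $t$ one participant tries product $i$ with probability $\frac{v_i a_{i,t}}{\sum_k v_k a_{k,t}}$, then purchases it with probability $q_i$ (independently); if purchased, $d_{i,t+1}=d_{i,t}+1$, all other counts unchanged. *)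

(* Defs.v *)
From HB Require Import structures.
From mathcomp Require Import all_boot all_order all_algebra.
From mathcomp Require Import all_classical all_reals all_analysis.
Set Implicit Arguments. Unset Strict Implicit. Unset Printing Implicit Defensive.
Import Order.TTheory GRing.Theory Num.Theory.
Local Open Scope classical_set_scope.
Local Open Scope ring_scope.

(* State of the market: purchase counts d_i of the n products. *)
Definition mstate (n : nat) := {ffun 'I_n -> nat}.

Definition mzero (n : nat) : mstate n := [ffun _ => 0%N].

Definition incr (n : nat) (x : mstate n) (i : 'I_n) : mstate n :=
  [ffun k => if k == i then (x k).+1 else x k].

Definition try_prob {R : realType} (n : nat) (v A : 'I_n -> R) (x : mstate n)
  (i : 'I_n) : R :=
  v i * (A i + (x i)%:R) / \sum_(k < n) v k * (A k + (x k)%:R).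

Definition trans {R : realType} (n : nat) (v A q : 'I_n -> R)
  (x y : mstate n) : R :=
  \sum_(i < n) (try_prob v A x i * q i) * (y == incr x i)%:R
  + (1 - \sum_(i < n) try_prob v A x i * q i) * (y == x)%:R.

(* X is the market process: X t = (d_{i,t+1})_i in the paper's indexing,
   i.e. X 0 = 0 and X evolves as the Markov chain with kernel [trans].
   The Markov property is expressed through the finite-dimensional laws. *)
Definition market_process {R : realType} (dT : measure_display)
  (T : measurableType dT) (P : probability T R) (n : nat)
  (v A q : 'I_n -> R) (X : nat -> T -> mstate n) : Prop :=
  (forall t (x : mstate n), measurable [set w : T | X t w = x]) /\
  P [set w : T | X 0%N w = mzero n] = 1%E /\
  (forall (t : nat) (h : nat -> mstate n),
     P [set w : T | forall s, (s <= t.+1)%N -> X s w = h s] =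
     (P [set w : T | forall s, (s <= t)%N -> X s w = h s]
      * (trans v A q (h t) (h t.+1))%:E)%E).

(* total market share of products j+1..n (0-based indices >= j);
   0/0 = 0 by convention in MathComp *)
Definition low_share {R : realType} (n : nat) (j : nat) (x : mstate n) : R :=
  (\sum_(i < n | (j <= i)%N) (x i)%:R) / (\sum_(i < n) (x i)%:R).

(* Main.v *)
Require Import Defs.
From HB Require Import structures.
From mathcomp Require Import all_boot all_order all_algebra.
From mathcomp Require Import all_classical all_reals all_analysis.
From mathcomp Require Import ring lra zify.
Import Order.TTheory GRing.Theory Num.Theory numFieldNormedType.Exports.
Local Open Scope classical_set_scope.
Local Open Scope ring_scope.
Set Implicit Arguments. Unset Strict Implicit. Unset Printing Implicit Defensive.
Lemma ar_rr_ge0 (R : realType) (a p m : R) : 0 < a -> 0 < p -> 0 <= m -> 0 <= a * (p + m) / (2 * p).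
Proof.
move=> a0 p0 m0; apply: divr_ge0; last by apply: mulr_ge0 => //; exact: ltW.
by apply: mulr_ge0; [exact: ltW|lra].
Qed.

Lemma ar_rr_lt (R : realType) (a p m : R) : 0 < a -> 0 < p -> m < p -> a * (p + m) / (2 * p) < a.
Proof. move=> a0 p0 mp; rewrite ltr_pdivrMr; [nra|lra]. Qed.

Lemma ar_cc_gt0 (R : realType) (a p m : R) : 0 < a -> m < p -> 0 < a * (p - m) / 2.
Proof. move=> a0 mp; apply: divr_gt0 => //; nra. Qed.

Lemma ar_ccE (R : realType) (a p m : R) : 0 < p -> p * (a * (p + m) / (2 * p)) - m * a = a * (p - m) / 2.
Proof. move=> p0; field; lra. Qed.

Lemma ln_le_sub1 (R : realType) (x : R) : 0 < x -> ln x <= x - 1.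
Proof.
move=> x0; have h : -1 < x - 1 by lra.
have := le_ln1Dx h; have -> : 1 + (x - 1) = x by ring.
by [].
Qed.

Lemma harm_lo (R : realType) (al : R) t : 0 < al ->
  ln (al + t%:R) - ln al <= \sum_(s < t) (al + s%:R)^-1.
Proof.
move=> a0; elim: t => [|t IH].
  by rewrite big_ord0 addr0 subrr.
rewrite big_ord_recr /=.
have p1 : 0 < al + t%:R by apply: ltr_wpDr => //; exact: ler0n.
have p2 : 0 < al + t.+1%:R by apply: ltr_wpDr => //; exact: ler0n.
have -> : ln (al + t.+1%:R) - ln al = (ln (al + t.+1%:R) - ln (al + t%:R)) + (ln (al + t%:R) - ln al).
  by rewrite addrA subrK.
rewrite addrC; apply: lerD => //.
rewrite -ln_div ?posrE //.
have -> : (al + t.+1%:R) / (al + t%:R) = 1 + (al + t%:R)^-1.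
  rewrite -natr1; field; exact: lt0r_neq0.
apply: le_ln1Dx; apply: (lt_le_trans (y := 0)); first by rewrite ltrN10.
by rewrite invr_ge0 ltW.
Qed.

Lemma harm_up (R : realType) (b : R) k : 0 < b ->
  \sum_(i < k) (b + i%:R)^-1 <= ln (b + k%:R) - ln b + b^-1 - (b + k%:R)^-1.
Proof.
move=> b0; elim: k => [|k IH].
  by rewrite big_ord0 addr0 subrr add0r subrr.
rewrite big_ord_recr /=.
have p1 : 0 < b + k%:R by apply: ltr_wpDr => //; exact: ler0n.
have p2 : 0 < b + k.+1%:R by apply: ltr_wpDr => //; exact: ler0n.
have key : (b + k.+1%:R)^-1 <= ln (b + k.+1%:R) - ln (b + k%:R).
  rewrite -ln_div ?posrE //.
  have := ln_le_sub1 (divr_gt0 p1 p2); rewrite ln_div ?posrE //.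
  have -> : (b + k%:R) / (b + k.+1%:R) - 1 = - (b + k.+1%:R)^-1.
    rewrite -natr1; field; rewrite natr1 lt0r_neq0 //.
  by rewrite ln_div ?posrE // lerNr opprB.
move: IH key; set L1 := ln (b + k.+1%:R); set L2 := ln (b + k%:R); set L3 := ln b.
set z := (b + k.+1%:R)^-1; set z2 := (b + k%:R)^-1; set S := \sum_(i < k) _.
lra.
Qed.

Lemma ar_decay (R : realType) (y S : R) : 0 <= y -> y <= 1 -> 0 <= S ->
  (1 - y) * (1 + S)^-1 <= (1 + (S + y))^-1.
Proof.
move=> y0 y1 S0.
have h1 : 0 < 1 + S by lra.
have h2 : 0 < 1 + (S + y) by lra.
rewrite ler_pdivrMr // mulrC ler_pdivlMr //.
nra.
Qed.

Lemma ar_small (R : realType) (d S : R) : 0 < d -> d^-1 <= S -> (1 + S)^-1 <= d.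
Proof.
move=> d0 dS; have S0 : 0 < S by apply: lt_le_trans dS; rewrite invr_gt0.
rewrite -[X in X <= _]mul1r ler_pdivrMr; last by lra.
have : d * d^-1 <= d * S by rewrite ler_pM2l.
rewrite divff ?lt0r_neq0 //; nra.
Qed.

Lemma ar_cc_le (R : realType) (a p m : R) : 0 < a -> 0 <= m -> m < p -> a * (p - m) / 2 <= a * p.
Proof. move=> a0 m0 mp; rewrite ler_pdivrMr; nra. Qed.

Lemma ln_lo1 (R : realType) (a b : R) : 0 < a -> 0 < b -> a / (b + a) <= ln (1 + a / b).
Proof.
move=> a0 b0.
have ba : 0 < b + a by lra.
have -> : 1 + a / b = (b + a) / b by field; lra.
rewrite ln_div ?posrE //.
have := ln_le_sub1 (divr_gt0 b0 ba); rewrite ln_div ?posrE //.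
have -> : b / (b + a) - 1 = - (a / (b + a)) by field; lra.
lra.
Qed.

Lemma ln_lo2 (R : realType) (r h : R) : 0 <= r -> r < h -> - (r / (h - r)) <= ln (1 - r / h).
Proof.
move=> r0 rh.
have h0 : 0 < h by lra.
have hr : 0 < h - r by lra.
have -> : 1 - r / h = (h - r) / h by field; lra.
rewrite ln_div ?posrE //.
have := ln_le_sub1 (divr_gt0 h0 hr); rewrite ln_div ?posrE //.
have -> : h / (h - r) - 1 = r / (h - r) by field; lra.
lra.
Qed.

Lemma ln_prod (R : realType) (F : nat -> R) m : (forall i, 0 < F i) ->
  ln (\prod_(i < m) F i) = \sum_(i < m) ln (F i).
Proof.
move=> Fp; elim: m => [|m IH]; first by rewrite !big_ord0 ln1.
rewrite !big_ord_recr /= lnM ?IH // posrE //.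
by apply: prodr_gt0 => i _.
Qed.

Lemma ar_comb (R : realType) (a r lP lG La la Lb lb lB bi : R) :
  0 <= r -> r < a -> a * (La - la) <= lP -> - (r * (Lb - lb + bi)) <= lG ->
  Lb <= lB + La -> la <= La ->
  (a - r) * la - a * la - r * lB + r * lb - r * bi <= lP + lG.
Proof.
move=> r0 ra hP hG hb hl.
have h1 : 0 <= (a - r) * (La - la) by apply: mulr_ge0; lra.
have h2 : r * Lb <= r * (lB + La) by apply: ler_wpM2l.
nra.
Qed.

Lemma ar_share (R : realType) (eta m k al be : R) : 0 < eta -> 0 < al -> 0 <= be -> 0 <= m ->
  0 < m + k -> eta <= m / (m + k) -> be + k <= (be / al + eta^-1) * (al + m).
Proof.
move=> e0 a0 b0 m0 mk H.
rewrite ler_pdivlMr // in H.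
have k1 : k <= m / eta.
  rewrite ler_pdivlMr //; nra.
have hb : be <= be / al * (al + m).
  rewrite mulrC mulrA ler_pdivlMr //. 
  rewrite mulrC; apply: ler_wpM2l => //; lra.
have hk : m / eta <= eta^-1 * (al + m).
  rewrite mulrC; apply: ler_wpM2l; [rewrite invr_ge0; lra|lra].
rewrite mulrDl; lra.
Qed.

Lemma ar_K (R : realType) (c b d L : R) : 0 < c -> 0 < b -> 0 < d -> b / (c * d) <= L ->
  d^-1 <= c / b * L.
Proof.
move=> c0 b0 d0 H.
have -> : d^-1 = c / b * (b / (c * d)) by field; rewrite !lt0r_neq0.
apply: ler_wpM2l => //; apply: divr_ge0; lra.
Qed.

Lemma ar_pos_real (R : realType) (x : R) : 0 <= x -> (forall d, 0 < d -> x <= d) -> x = 0.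
Proof.
move=> x0 H; apply/eqP; rewrite eq_le x0 andbT; apply/negP => /negP; rewrite -ltNge => xp.
have h2 : (0 : R) < 2 by lra.
have := H (x / 2) (divr_gt0 xp h2); lra.
Qed.

Lemma ar_Av (R : realType) (a v q t : R) : 0 < a -> 0 < v -> 0 <= q -> q <= 1 -> 0 <= t ->
  a * (v * q) <= v * (a + t).
Proof.
move=> a0 v0 q0 q1 t0.
have h1 : 0 <= a * v * (1 - q) by apply: mulr_ge0; [apply: mulr_ge0; lra|lra].
have h2 : 0 <= v * t by apply: mulr_ge0; lra.
nra.
Qed.
Section Chain.
Context (R : realType) (dT : measure_display) (T : measurableType dT)
  (P : probability T R) (n : nat) (v A q : 'I_n -> R) (X : nat -> T -> mstate n).
Hypothesis vpos : forall i, 0 < v i.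
Hypothesis Apos : forall i, 0 < A i.
Hypothesis q01 : forall i, 0 <= q i <= 1.
Hypothesis HX : market_process P v A q X.

Definition pr (F : set T) : R := fine (P F).

Lemma prE F : measurable F -> P F = (pr F)%:E.
Proof. by move=> mF; rewrite /pr fineK //; exact: fin_num_measure. Qed.

Lemma pr_ge0 F : 0 <= pr F.
Proof. exact/fine_ge0/measure_ge0. Qed.

Lemma prU F G : measurable F -> measurable G -> F `&` G = set0 ->
  pr (F `|` G) = pr F + pr G.
Proof.
move=> mF mG FG; rewrite /pr measureU // fineD //; exact: fin_num_measure.
Qed.

Lemma pr_le F G : measurable F -> measurable G -> F `<=` G -> pr F <= pr G.
Proof.
move=> mF mG FG; rewrite /pr; apply: fine_le; try exact: fin_num_measure.
by apply: le_measure; rewrite ?inE.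
Qed.

Lemma prU2 F G : measurable F -> measurable G -> pr (F `|` G) <= pr F + pr G.
Proof.
move=> mF mG; have mFG : measurable (F `|` G) by exact: measurableU.
rewrite -lee_fin EFinD -(prE mFG) -(prE mF) -(prE mG).
exact: measureU2.
Qed.

Lemma prT : pr setT = 1.
Proof. by rewrite /pr probability_setT. Qed.

Lemma measF (G : nat -> set T) : (forall s, measurable (G s)) ->
  measurable [set w | forall s, G s w].
Proof.
move=> mG; have -> : [set w | forall s, G s w] = \bigcap_s G s.
  by apply/seteqP; split => w /= H s; [move=> _; exact: H | exact: H].
exact: bigcapT_measurable.
Qed.

Lemma measE (G : nat -> set T) : (forall s, measurable (G s)) ->
  measurable [set w | exists s, G s w].
Proof.
move=> mG; have -> : [set w | exists s, G s w] = \bigcup_s G s.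
  by apply/seteqP; split => w /=; [case=> s H; exists s | case=> s _ H; exists s].
exact: bigcupT_measurable.
Qed.

Lemma measI (b : bool) (G : set T) : measurable G -> measurable [set w | b -> G w].
Proof.
case: b => mG.
  by have -> : [set w | true -> G w] = G by apply/seteqP; split => w /= //; apply.
by have -> : [set w | false -> G w] = setT by apply/seteqP; split => w /= //.
Qed.

Lemma measA (b : bool) (G : set T) : measurable G -> measurable [set w | b /\ G w].
Proof.
case: b => mG.
  by have -> : [set w | true /\ G w] = G by apply/seteqP; split => w /=; [case|].
by have -> : [set w | false /\ G w] = set0 by apply/seteqP; split => w /=; [case|].
Qed.

Lemma mXeq t x : measurable [set w | X t w = x].
Proof. exact: HX.1. Qed.

Lemma mX t (S : pred (mstate n)) : measurable [set w | S (X t w)].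
Proof.
have -> : [set w | S (X t w)] = \bigcup_(k in [set k | if pickle_inv k is Some x then S x else false])
   [set w | Some (X t w) = pickle_inv k].
  apply/seteqP; split => w /=.
    move=> Sw; exists (pickle (X t w)); rewrite /= ?pickleK_inv //.
  by move=> [k /=]; case: (pickle_inv k) => // x Sx [->].
apply: bigcup_measurable => k _.
case: (pickle_inv k) => [x|].
  have -> : [set w | Some (X t w) = Some x] = [set w | X t w = x].
    by apply/seteqP; split => w /= [->].
  exact: mXeq.
by have -> : [set w | Some (X t w) = None] = set0 by apply/seteqP; split.
Qed.

End Chain.
Section Chain2.
Context (R : realType) (n : nat) (v A q : 'I_n -> R).
Hypothesis vpos : forall i, 0 < v i.
Hypothesis Apos : forall i, 0 < A i.
Hypothesis q01 : forall i, 0 <= q i <= 1.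

Definition succ (x : mstate n) : seq (mstate n) := x :: [seq incr x i | i <- enum 'I_n].
Fixpoint Reach (t : nat) : seq (mstate n) :=
  if t is t'.+1 then undup (flatten [seq succ x | x <- Reach t']) else [:: Defs.mzero n].

Lemma Reach_uniq t : uniq (Reach t).
Proof. by case: t => [|t] //=; exact: undup_uniq. Qed.

Lemma Reach_succ t x y : x \in Reach t -> y \in succ x -> y \in Reach t.+1.
Proof.
move=> xR yS; rewrite /= mem_undup; apply/flattenP; exists (succ x) => //.
by apply/mapP; exists x.
Qed.

Lemma Reach_x t x : x \in Reach t -> x \in Reach t.+1.
Proof. by move=> xR; apply: (Reach_succ xR); rewrite inE eqxx. Qed.

Lemma Reach_incr t x i : x \in Reach t -> incr x i \in Reach t.+1.
Proof.
move=> xR; apply: (Reach_succ xR); rewrite inE; apply/orP; right.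
by apply/mapP; exists i => //; rewrite mem_enum.
Qed.

Lemma Reach_bound t x : x \in Reach t -> forall i, (x i <= t)%N.
Proof.
elim: t x => [|t IH] x /=.
  by rewrite inE => /eqP -> i; rewrite /Defs.mzero ffunE.
rewrite mem_undup => /flattenP [s /mapP [y yR ->]]; rewrite inE => /orP [/eqP ->|].
  by move=> i; apply: leqW; exact: IH.
move=> /mapP [k _ ->] i; rewrite /incr ffunE; case: ifP => _.
  by rewrite ltnS; exact: IH.
by apply: leqW; exact: IH.
Qed.

Definition sx (x : mstate n) : R := \sum_(k < n) v k * (A k + (x k)%:R).
Definition pp (x : mstate n) (i : 'I_n) : R := try_prob v A x i * q i.
Definition Kop (g : mstate n -> R) (x : mstate n) : R :=
  \sum_(i < n) pp x i * g (incr x i) + (1 - \sum_(i < n) pp x i) * g x.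

Lemma Aterm_gt0 (x : mstate n) k : 0 < A k + (x k)%:R.
Proof. by apply: ltr_wpDr => //; exact: ler0n. Qed.

Lemma sx_ge0 x : 0 <= sx x.
Proof. by apply: sumr_ge0 => k _; apply: mulr_ge0; [exact: ltW|exact: ltW (Aterm_gt0 x k)]. Qed.

Lemma sx_gt0 x (i : 'I_n) : 0 < sx x.
Proof.
rewrite /sx (bigD1 i) //=; apply: ltr_wpDr.
  by apply: sumr_ge0 => k _; apply: mulr_ge0; [exact: ltW|exact: ltW (Aterm_gt0 x k)].
by apply: mulr_gt0 => //; exact: Aterm_gt0.
Qed.

Lemma try_probE x i : try_prob v A x i = v i * (A i + (x i)%:R) / sx x.
Proof. by []. Qed.

Lemma try_ge0 x i : 0 <= try_prob v A x i.
Proof.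
rewrite try_probE; apply: divr_ge0; last exact: sx_ge0.
by apply: mulr_ge0; [exact: ltW|exact: ltW (Aterm_gt0 x i)].
Qed.

Lemma pp_ge0 x i : 0 <= pp x i.
Proof. by apply: mulr_ge0; [exact: try_ge0|case/andP: (q01 i)]. Qed.

Lemma sum_try x (i0 : 'I_n) : \sum_(i < n) try_prob v A x i = 1.
Proof.
rewrite /try_prob -mulr_suml divff //.
exact: lt0r_neq0 (sx_gt0 x i0).
Qed.

Lemma sum_pp_le1 x (i0 : 'I_n) : \sum_(i < n) pp x i <= 1.
Proof.
rewrite -(sum_try x i0); apply: ler_sum => i _; rewrite /pp.
by rewrite ler_piMr ?try_ge0 //; case/andP: (q01 i).
Qed.

Lemma Kop_le (g g' : mstate n -> R) x (i0 : 'I_n) :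
  (forall y, g y <= g' y) -> Kop g x <= Kop g' x.
Proof.
move=> gg; apply: lerD.
  by apply: ler_sum => i _; apply: ler_wpM2l; [exact: pp_ge0|exact: gg].
by apply: ler_wpM2l; [rewrite subr_ge0; exact: sum_pp_le1|exact: gg].
Qed.

Lemma Kop_cst c x : Kop (fun _ => c) x = c.
Proof. by rewrite /Kop -big_distrl /=; ring. Qed.

Lemma Kop_scale (k : R) g x : Kop (fun y => k * g y) x = k * Kop g x.
Proof.
rewrite /Kop mulrDr; congr (_ + _); last by ring.
by rewrite big_distrr; apply: eq_bigr => i _ /=; ring.
Qed.

Lemma sum_pick (l : seq (mstate n)) (z : mstate n) (g : mstate n -> R) :
  uniq l -> z \in l -> \sum_(y <- l) (y == z)%:R * g y = g z.
Proof.
move=> ul zl; rewrite (big_rem z) //= eqxx mul1r big_seq big1 ?addr0 // => y.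
by rewrite mem_rem_uniq // inE => /andP [yz _]; rewrite (negbTE yz) mul0r.
Qed.

Lemma Ksum (l : seq (mstate n)) x (g : mstate n -> R) :
  uniq l -> x \in l -> (forall i, incr x i \in l) ->
  \sum_(y <- l) trans v A q x y * g y = Kop g x.
Proof.
move=> ul xl il; rewrite /trans.
under eq_bigr => y _ do rewrite mulrDl big_distrl /=.
rewrite big_split /= exchange_big /= /Kop; congr (_ + _).
  apply: eq_bigr => i _; rewrite -(sum_pick g ul (il i)) big_distrr /=.
  by apply: eq_bigr => y _; rewrite /pp; ring.
rewrite -(sum_pick g ul xl) big_distrr /=.
by apply: eq_bigr => y _; rewrite /pp; ring.
Qed.

End Chain2.
Section Chain3.
Context (R : realType) (dT : measure_display) (T : measurableType dT)
  (P : probability T R) (n : nat) (v A q : 'I_n -> R) (X : nat -> T -> mstate n).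
Hypothesis vpos : forall i, 0 < v i.
Hypothesis Apos : forall i, 0 < A i.
Hypothesis q01 : forall i, 0 <= q i <= 1.
Hypothesis HX : market_process P v A q X.

Local Notation pr := (pr P).
Local Notation Reach := (Reach n).
Local Notation Kop := (Kop v A q).

Definition Aev (S : nat -> pred (mstate n)) t :=
  [set w | forall s, (s < t)%N -> S s (X s w)].
Definition Cev S (h : nat -> mstate n) t m :=
  Aev S t `&` [set w | forall s, (t <= s <= m)%N -> X s w = h s].
Definition nullR t := P [set w | X t w \notin Reach t] = 0%E.
Definition upd (h : nat -> mstate n) t x := fun s => if s == t then x else h s.
Definition Strue : nat -> pred (mstate n) := fun _ _ => true.
Definition Exp t S (g : mstate n -> R) :=
  \sum_(x <- Reach t) pr (Cev S (fun _ => x) t t) * g x.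

Lemma mAev S t : measurable (Aev S t).
Proof.
rewrite /Aev; apply: (@measF _ _ (fun s => [set w | (s < t)%N -> S s (X s w)])) => s.
apply: measI; exact: (mX HX).
Qed.

Lemma mCev S h t m : measurable (Cev S h t m).
Proof.
apply: measurableI; first exact: mAev.
apply: (@measF _ _ (fun s => [set w | (t <= s <= m)%N -> X s w = h s])) => s.
apply: measI; exact: (mXeq HX).
Qed.

Lemma pr0 : pr set0 = 0.
Proof. by rewrite /pr measure0. Qed.

Lemma listsum t F (l : seq (mstate n)) : measurable F -> uniq l ->
  pr (F `&` [set w | X t w \in l]) = \sum_(x <- l) pr (F `&` [set w | X t w = x]).
Proof.
move=> mF; elim: l => [|x l IH] /=.
  move=> _; rewrite big_nil -pr0; congr pr; apply/seteqP; split => w //=.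
  by case=> _; rewrite in_nil.
move=> /andP [xl ul]; rewrite big_cons -IH //.
have -> : F `&` [set w | X t w \in x :: l] =
    (F `&` [set w | X t w = x]) `|` (F `&` [set w | X t w \in l]).
  apply/seteqP; split => w /=.
    by case=> Fw; rewrite inE => /orP [/eqP ->|wl]; [left|right].
  by case=> [[Fw ->]|[Fw wl]]; split => //; rewrite inE ?eqxx // wl orbT.
apply: prU.
- by apply: measurableI => //; exact: (mXeq HX).
- by apply: measurableI => //; exact: (mX HX t (fun y => y \in l)).
- apply/seteqP; split => w //= [[_ ->] [_ H]]; by rewrite H in xl.
Qed.

Lemma prsplit t F : nullR t -> measurable F ->
  pr F = \sum_(x <- Reach t) pr (F `&` [set w | X t w = x]).
Proof.
move=> Nt mF; rewrite -listsum //; last exact: Reach_uniq.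
have mI : measurable (F `&` [set w | X t w \in Reach t]).
  by apply: measurableI => //; exact: (mX HX t (fun x => x \in Reach t)).
have mJ : measurable (F `&` [set w | X t w \notin Reach t]).
  by apply: measurableI => //; exact: (mX HX t (fun x => x \notin Reach t)).
have EF : F = (F `&` [set w | X t w \in Reach t]) `|` (F `&` [set w | X t w \notin Reach t]).
  apply/seteqP; split => w /=.
    by move=> Fw; case: (boolP (X t w \in Reach t)) => H; [left|right].
  by case=> [] [].
rewrite {1}EF prU //; last first.
  by apply/seteqP; split => w //= [[_ H1] [_ H2]]; rewrite H1 in H2.
have -> : pr (F `&` [set w | X t w \notin Reach t]) = 0.
  apply/eqP; rewrite eq_le pr_ge0 andbT.
  have : pr (F `&` [set w | X t w \notin Reach t]) <= pr [set w | X t w \notin Reach t].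
    by apply: pr_le; [exact: mJ|exact: (mX HX t (fun x => x \notin Reach t))| move=> w []].
  by rewrite {2}/pr Nt.
by rewrite addr0.
Qed.

Lemma cylE t (h : nat -> mstate n) :
  pr [set w | forall s, (s <= t.+1)%N -> X s w = h s] =
  pr [set w | forall s, (s <= t)%N -> X s w = h s] * trans v A q (h t) (h t.+1).
Proof.
rewrite /pr HX.2.2 fineM //.
apply: fin_num_measure.
apply: (@measF _ _ (fun s => [set w | (s <= t)%N -> X s w = h s])) => s.
apply: measI; exact: (mXeq HX).
Qed.

Lemma Cev0 S h m : Cev S h 0 m = [set w | forall s, (s <= m)%N -> X s w = h s].
Proof.
apply/seteqP; split => w /=; first by case=> _ H s sm; apply: H.
by move=> H; split => // s /andP [_ sm]; exact: H.
Qed.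

Lemma Cev_ext S h h' t m : (forall s, (t <= s <= m)%N -> h s = h' s) ->
  Cev S h t m = Cev S h' t m.
Proof.
move=> hh; apply/seteqP; split => w [HA HE]; split => // s sm.
  by rewrite HE // hh.
by rewrite HE // hh.
Qed.

Lemma Cev_split S h t m x : (t <= m)%N ->
  Cev S h t.+1 m `&` [set w | X t w = x] =
  if S t x then Cev S (upd h t x) t m else set0.
Proof.
move=> tm; apply/seteqP; split => w.
  move=> [[HA HE] Hx]; case: ifP => Sx.
    split => s.
      by move=> st; apply: HA; exact: ltnW.
    move=> /andP [ts sm]; rewrite /upd; case: eqP => [->//|st].
    by apply: HE; rewrite sm andbT ltn_neqAle ts andbT; apply/eqP => E; apply: st.
  by have := HA t (ltnSn t); rewrite Hx Sx.
case: ifP => Sx //= [HA HE].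
have Xt : X t w = x by rewrite HE ?leqnn ?tm // /upd eqxx.
split => //; split.
  move=> s; rewrite ltnS leq_eqVlt => /orP [/eqP ->|st]; first by rewrite Xt.
  exact: HA.
move=> s /andP [ts sm]; rewrite HE; last by rewrite sm andbT ltnW.
by rewrite /upd; case: eqP => // E; rewrite E ltnn in ts.
Qed.

Lemma prsplitS S h t m : (t <= m)%N -> nullR t ->
  pr (Cev S h t.+1 m) = \sum_(x <- Reach t) (S t x)%:R * pr (Cev S (upd h t x) t m).
Proof.
move=> tm Nt; rewrite (prsplit Nt (mCev _ _ _ _)); apply: eq_bigr => x _.
rewrite Cev_split //; case: (S t x); first by rewrite mul1r.
by rewrite mul0r pr0.
Qed.

Lemma Hk t : (forall s, (s < t)%N -> nullR s) -> forall S h m, (t <= m)%N ->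
  pr (Cev S h t m.+1) = pr (Cev S h t m) * trans v A q (h m) (h m.+1).
Proof.
elim: t => [|t IH] Hn S h m tm.
  by rewrite !Cev0 cylE.
have Nt : nullR t by apply: Hn.
have tm' : (t <= m)%N by exact: ltnW.
have tm'' : (t <= m.+1)%N by exact: leqW.
rewrite !prsplitS //.
rewrite big_distrl /=; apply: eq_bigr => x _.
rewrite IH //; last by move=> s st; apply: Hn; exact: ltnW.
rewrite /upd; have -> : (m == t) = false by apply/eqP => E; lia.
have -> : (m.+1 == t) = false by apply/eqP => E; lia.
by rewrite mulrA.
Qed.

Lemma Markov t S g : (forall s, (s <= t)%N -> nullR s) ->
  Exp t.+1 S g = Exp t S (fun x => (S t x)%:R * Kop g x).
Proof.
move=> Hn; rewrite /Exp.
have E1 : forall y, pr (Cev S (fun _ => y) t.+1 t.+1) =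
    \sum_(x <- Reach t) (S t x)%:R * pr (Cev S (fun _ => x) t t) * trans v A q x y.
  move=> y; rewrite prsplitS //; last exact: Hn.
  apply: eq_bigr => x _; rewrite Hk //; last by move=> s st; apply: Hn; exact: ltnW.
  rewrite /upd eqxx.
  have -> : (t.+1 == t) = false by apply/eqP => E; lia.
  rewrite (@Cev_ext _ (upd (fun=> y) t x) (fun=> x)) ?mulrA // => s.
  move=> /andP [h1 h2]; have -> : s = t by lia.
  by rewrite /upd eqxx.
under eq_bigr => y _ do rewrite E1 big_distrl /=.
rewrite exchange_big /= big_seq [in RHS]big_seq; apply: eq_bigr => x xR.
rewrite -(Ksum v A q g (Reach_uniq n t.+1) (Reach_x xR) (fun i => Reach_incr i xR)).
rewrite !big_distrr /=; apply: eq_bigr => y _; ring.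
Qed.

Lemma CevT t x : Cev Strue (fun _ => x) t t = [set w | X t w = x].
Proof.
apply/seteqP; split => w /=; first by case=> _ H; apply: H; rewrite leqnn.
move=> H; split => // s /andP [h1 h2]; have -> : s = t by lia.
done.
Qed.

Lemma ExpT1 t : nullR t -> Exp t Strue (fun _ => 1) = 1.
Proof.
move=> Nt; rewrite /Exp; transitivity (pr setT); last exact: prT.
rewrite (prsplit Nt measurableT); apply: eq_bigr => x _.
by rewrite mulr1 CevT setTI.
Qed.

Lemma null_all t : nullR t.
Proof.
suff : forall s, (s <= t)%N -> nullR s by apply; rewrite leqnn.
elim: t => [|t IH] s.
  rewrite leqn0 => /eqP ->; rewrite /nullR.
  have -> : [set w | X 0 w \notin Reach 0] = ~` [set w | X 0 w = Defs.mzero n].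
    apply/seteqP; split => w /=; rewrite inE.
      by move=> H E; rewrite E eqxx in H.
    by move=> H; apply/eqP.
  by rewrite probability_setC ?HX.2.1 ?subee //; exact: (mXeq HX).
rewrite leq_eqVlt => /orP [/eqP ->|]; last exact: IH.
have Hpr : pr [set w | X t.+1 w \in Reach t.+1] = 1.
  have L := listsum t.+1 measurableT (Reach_uniq n t.+1).
  rewrite setTI in L; rewrite L.
  transitivity (Exp t.+1 Strue (fun _ => 1)).
    by rewrite /Exp; apply: eq_bigr => y _; rewrite mulr1 CevT setTI.
  rewrite Markov; last exact: IH.
  transitivity (Exp t Strue (fun _ => 1)).
    by rewrite /Exp; apply: eq_bigr => y _; rewrite Kop_cst mulr1.
  exact: ExpT1 (IH t (leqnn t)).
rewrite /nullR.
have -> : [set w | X t.+1 w \notin Reach t.+1] = ~` [set w | X t.+1 w \in Reach t.+1].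
  by apply/seteqP; split => w /=; [move/negP|move/negP].
have mR := mX HX t.+1 (fun x => x \in Reach t.+1).
by rewrite probability_setC // prE // Hpr subee.
Qed.

End Chain3.
Section Chain4.
Context (R : realType) (dT : measure_display) (T : measurableType dT)
  (P : probability T R) (n : nat) (v A q : 'I_n -> R) (X : nat -> T -> mstate n).
Hypothesis vpos : forall i, 0 < v i.
Hypothesis Apos : forall i, 0 < A i.
Hypothesis q01 : forall i, 0 <= q i <= 1.
Hypothesis HX : market_process P v A q X.
Variable i0 : 'I_n.

Local Notation pr := (pr P).
Local Notation Reach := (Reach n).
Local Notation Kop := (Kop v A q).
Local Notation Exp := (Exp P X).
Local Notation Aev := (Aev X).
Local Notation Cev := (Cev X).

Lemma Exp_le t S g g' : (forall x, x \in Reach t -> g x <= g' x) -> Exp t S g <= Exp t S g'.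
Proof.
move=> gg; rewrite /Exp big_seq [X in _ <= X]big_seq; apply: ler_sum => x xR.
by apply: ler_wpM2l; [exact: pr_ge0 P _|exact: gg].
Qed.

Lemma Exp_add t S g g' : Exp t S (fun x => g x + g' x) = Exp t S g + Exp t S g'.
Proof. by rewrite /Exp -big_split /=; apply: eq_bigr => x _; rewrite mulrDr. Qed.

Lemma Exp_scale t S (k : R) g : Exp t S (fun x => k * g x) = k * Exp t S g.
Proof. by rewrite /Exp big_distrr /=; apply: eq_bigr => x _; ring. Qed.

Lemma Exp_S t S S' g : (forall s, (s < t)%N -> S s =1 S' s) -> Exp t S g = Exp t S' g.
Proof.
move=> SS; rewrite /Exp; apply: eq_bigr => x _; congr (pr _ * _).
apply/seteqP; split => w [HA HE]; split => // s st; [rewrite -SS|rewrite SS] => //; exact: HA.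
Qed.

Lemma CevA S t x : Cev S (fun _ => x) t t = Aev S t `&` [set w | X t w = x].
Proof.
apply/seteqP; split => w [HA HE]; split => //.
  by apply: HE; rewrite leqnn.
by move=> s /andP [h1 h2]; have -> : s = t by lia.
Qed.

Lemma Exp_pred t S (Pd : pred (mstate n)) :
  pr (Aev S t `&` [set w | Pd (X t w)]) = Exp t S (fun x => (Pd x)%:R).
Proof.
rewrite (prsplit HX (null_all HX t)); last by apply: measurableI; [exact: (mAev HX)|exact: (mX HX)].
rewrite /Exp; apply: eq_bigr => x _; rewrite CevA.
case: (boolP (Pd x)) => Px.
  rewrite mulr1; congr pr; apply/seteqP; split => w /=.
    by case=> [] [].
  by case=> HA HX'; split => //; split => //; rewrite HX'.
rewrite mulr0 -(pr0 P); congr pr; apply/seteqP; split => w //=.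
by case=> [] [_ H] E; rewrite E (negbTE Px) in H.
Qed.

Variable f : mstate n -> R.
Hypothesis f_ge0 : forall x, 0 <= f x.
Hypothesis Kf : forall x, Kop f x <= f x.
Variable eps : R.
Hypothesis eps_gt0 : 0 < eps.

Fixpoint U (u : nat) (x : mstate n) : R :=
  if u is u'.+1 then (if eps <= f x then 1 else Kop (U u') x) else ((eps <= f x)%R)%:R.

Lemma U_le u x : U u x <= f x / eps.
Proof.
elim: u x => [|u IH] x /=.
  case: (boolP (eps <= f x)) => H /=; last by rewrite divr_ge0 // ltW.
  by rewrite ler_pdivlMr // mul1r.
case: ifP => H; first by rewrite ler_pdivlMr // mul1r.
apply: (le_trans (Kop_le vpos Apos q01 x i0 IH)).
have -> : (fun y => f y / eps) = (fun y => eps^-1 * f y) by apply/funext => y; rewrite mulrC.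
rewrite (Kop_scale v A q (eps^-1) f x) mulrC.
by apply: ler_wpM2r; [rewrite invr_ge0 ltW|exact: Kf].
Qed.

Definition Hit t u := [set w | exists s, (t <= s <= t + u)%N /\ eps <= f (X s w)].

Lemma mHit t u : measurable (Hit t u).
Proof.
rewrite /Hit; apply: (@measE _ _ (fun s => [set w | (t <= s <= t + u)%N /\ eps <= f (X s w)])) => s.
apply: measA; exact: (mX HX s (fun x => eps <= f x)).
Qed.

Lemma maximal u : forall t S, pr (Aev S t `&` Hit t u) <= Exp t S (U u).
Proof.
elim: u => [|u IH] t S.
  suff -> : Aev S t `&` Hit t 0 = Aev S t `&` [set w | eps <= f (X t w)].
    by rewrite (Exp_pred t S (fun x => eps <= f x)).
  apply/seteqP; split => w [HA HH]; split => //.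
    by case: HH => s [/andP [h1 h2] H]; have <- : s = t by lia.
  by exists t; rewrite leqnn addn0 leqnn.
pose S' := fun s => if s == t then (fun x => f x < eps) else S s.
have sub : Aev S t `&` Hit t u.+1 `<=`
    (Aev S t `&` [set w | eps <= f (X t w)]) `|` (Aev S' t.+1 `&` Hit t.+1 u).
  move=> w [HA [s [/andP [h1 h2] Hs]]].
  case: (boolP (eps <= f (X t w))) => Ht; first by left.
  right; split.
    move=> s' s't; rewrite /S'; case: eqP => E.
      by rewrite E ltNge.
    by apply: HA; lia.
  exists s; split => //.
  have st : s != t by apply/eqP => E; rewrite E in Hs; rewrite Hs in Ht.
  by apply/andP; split; [lia|lia].
have m1 : measurable (Aev S t `&` [set w | eps <= f (X t w)]).
  by apply: measurableI; [exact: (mAev HX)|exact: (mX HX t (fun x => eps <= f x))].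
have m2 : measurable (Aev S' t.+1 `&` Hit t.+1 u).
  by apply: measurableI; [exact: (mAev HX)|exact: mHit].
apply: (le_trans (pr_le P _ _ sub)).
- by apply: measurableI; [exact: (mAev HX)|exact: mHit].
- exact: measurableU.
apply: (le_trans (prU2 P m1 m2)).
rewrite (Exp_pred t S (fun x => eps <= f x)); apply: (@le_trans _ _ (Exp t S (fun x => ((eps <= f x)%R)%:R) +
   Exp t.+1 S' (U u))); first by apply: lerD => //; exact: IH.
rewrite (Markov HX S' (U u) (fun s _ => null_all HX s)).
have SS : forall s, (s < t)%N -> S' s =1 S s.
  by move=> s st x; rewrite /S'; have -> : (s == t) = false by apply/eqP => E; lia.
rewrite (@Exp_S t S' S _ SS).
rewrite -Exp_add; apply: Exp_le => x _ /=; rewrite /S' eqxx.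
by case: ifP => H; rewrite ltNge H /= ?mul0r ?addr0 ?add0r ?mul1r.
Qed.

Lemma AevT t : Aev (@Strue n) t = setT.
Proof. by apply/seteqP; split => w. Qed.

Lemma maximalT T0 u : pr (Hit T0 u) <= Exp T0 (@Strue n) f / eps.
Proof.
have := maximal u T0 (@Strue n); rewrite AevT setTI => H.
apply: (le_trans H); rewrite mulrC -Exp_scale; apply: Exp_le => x _.
by rewrite mulrC; exact: U_le.
Qed.

End Chain4.
Section Market.
Context (R : realType) (n : nat) (v A q : 'I_n -> R) (j : nat) (qp qm : R).
Hypothesis vpos : forall i, 0 < v i.
Hypothesis Apos : forall i, 0 < A i.
Hypothesis q01 : forall i, 0 <= q i <= 1.
Hypothesis qm0 : 0 <= qm.
Hypothesis qmp : qm < qp.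
Hypothesis Hhi : forall i : 'I_n, (i < j)%N -> v i * q i = qp.
Hypothesis Hlo : forall i : 'I_n, (j <= i)%N -> v i * q i = qm.
Variables i0 i1 : 'I_n.
Hypothesis Hi0 : (i0 < j)%N.
Hypothesis Hi1 : (j <= i1)%N.

Local Notation Kop := (Kop v A q).

Definition aa := A i0.
Definition L0 := \sum_(i < n | (j <= i)%N) A i.
Definition H0 := \sum_(i < n | ~~ (j <= i)%N) A i.
Definition rr := aa * (qp + qm) / (2 * qp).
Definition cc := aa * (qp - qm) / 2.
Definition mN (x : mstate n) := (\sum_(i < n | (j <= i)%N) x i)%N.
Definition kN (x : mstate n) := (\sum_(i < n | ~~ (j <= i)%N) x i)%N.
Definition Phi m := \prod_(i < m) (1 + aa / (L0 + i%:R)).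
Definition Gam k := \prod_(i < k) (1 - rr / (H0 + i%:R)).
Definition ff x := Phi (mN x) * Gam (kN x).

Lemma qp_gt0 : 0 < qp.
Proof. exact: le_lt_trans qm0 qmp. Qed.

Lemma aa_gt0 : 0 < aa.
Proof. exact: Apos. Qed.

Lemma L0_gt0 : 0 < L0.
Proof.
rewrite /L0 (bigD1 i1) //=; apply: ltr_wpDr; last exact: Apos.
by apply: sumr_ge0 => i _; exact: ltW.
Qed.

Lemma aa_le_H0 : aa <= H0.
Proof.
rewrite /H0 (bigD1 i0) /=; last by rewrite -ltnNge.
rewrite /aa lerDl; by apply: sumr_ge0 => i _; exact: ltW.
Qed.

Lemma rr_ge0 : 0 <= rr.
Proof. exact: ar_rr_ge0 aa_gt0 qp_gt0 qm0. Qed.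

Lemma rr_lt_aa : rr < aa.
Proof. exact: ar_rr_lt aa_gt0 qp_gt0 qmp. Qed.

Lemma cc_gt0 : 0 < cc.
Proof. exact: ar_cc_gt0 aa_gt0 qmp. Qed.

Lemma ccE : qp * rr - qm * aa = cc.
Proof. exact: ar_ccE qp_gt0. Qed.

Lemma Phi_fact_gt0 (i : nat) : 0 < 1 + aa / (L0 + i%:R).
Proof.
have := L0_gt0; have := aa_gt0 => a0 l0.
apply: ltr_wpDr; last exact: ltr01.
by apply: divr_ge0; [exact: ltW|apply: addr_ge0; [exact: ltW|exact: ler0n]].
Qed.

Lemma Gam_fact_gt0 (i : nat) : 0 < 1 - rr / (H0 + i%:R).
Proof.
have := rr_lt_aa; have := aa_le_H0; have := aa_gt0 => a0 aH ra.
have Hp : 0 < H0 + i%:R by apply: ltr_wpDr; [exact: ler0n|exact: lt_le_trans aH].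
rewrite subr_gt0 ltr_pdivrMr // mul1r.
apply: (lt_le_trans ra); apply: (le_trans aH); rewrite lerDl; exact: ler0n.
Qed.

Lemma Phi_gt0 m : 0 < Phi m.
Proof. by apply: prodr_gt0 => i _; exact: Phi_fact_gt0. Qed.

Lemma Gam_gt0 k : 0 < Gam k.
Proof. by apply: prodr_gt0 => i _; exact: Gam_fact_gt0. Qed.

Lemma ff_gt0 x : 0 < ff x.
Proof. by apply: mulr_gt0; [exact: Phi_gt0|exact: Gam_gt0]. Qed.

Lemma sum_eq_i (Pd : pred 'I_n) (i : 'I_n) :
  (\sum_(k < n | Pd k) (k == i : nat) = Pd i)%N.
Proof.
rewrite big_mkcond /= (bigD1 i) //= eqxx big1 => [|k /negbTE ->]; last by case: (Pd k).
by case: (Pd i).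
Qed.

Lemma incrE (x : mstate n) i k : (incr x i k = x k + (k == i))%N.
Proof. by rewrite /incr ffunE; case: eqP => _; [rewrite addn1|rewrite addn0]. Qed.

Lemma mN_incr x i : mN (incr x i) = (mN x + (j <= i))%N.
Proof.
rewrite /mN; under eq_bigr => k _ do rewrite incrE.
by rewrite big_split /= (sum_eq_i (fun k : 'I_n => (j <= k)%N)).
Qed.

Lemma kN_incr x i : kN (incr x i) = (kN x + ~~ (j <= i))%N.
Proof.
rewrite /kN; under eq_bigr => k _ do rewrite incrE.
by rewrite big_split /= (sum_eq_i (fun k : 'I_n => ~~ (j <= k)%N)).
Qed.

Lemma ff_incr x i : ff (incr x i) = ff x *
  (if (j <= i)%N then 1 + aa / (L0 + (mN x)%:R) else 1 - rr / (H0 + (kN x)%:R)).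
Proof.
rewrite /ff mN_incr kN_incr; case: (j <= i)%N => /=.
  by rewrite addn0 addn1 /Phi big_ord_recr /=; ring.
by rewrite addn0 addn1 /Gam big_ord_recr /=; ring.
Qed.

Lemma sum_low x : \sum_(i < n | (j <= i)%N) pp v A q x i = qm * (L0 + (mN x)%:R) / sx v A x.
Proof.
rewrite /pp /mN natr_sum /L0 -big_split /= mulr_sumr mulr_suml; apply: eq_bigr => i Hi.
by rewrite try_probE -(Hlo Hi); ring.
Qed.

Lemma sum_high x : \sum_(i < n | ~~ (j <= i)%N) pp v A q x i = qp * (H0 + (kN x)%:R) / sx v A x.
Proof.
rewrite /pp /kN natr_sum /H0 -big_split /= mulr_sumr mulr_suml; apply: eq_bigr => i Hi.
by rewrite try_probE -(Hhi (i:=i)); [ring|rewrite ltnNge].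
Qed.

Lemma Kop_ff x : Kop ff x = ff x * (1 - cc / sx v A x).
Proof.
have sp := sx_gt0 vpos Apos x i0.
have L : 0 < L0 + (mN x)%:R by apply: ltr_wpDr; [exact: ler0n|exact: L0_gt0].
have H : 0 < H0 + (kN x)%:R.
  by apply: ltr_wpDr; [exact: ler0n|exact: lt_le_trans aa_gt0 aa_le_H0].
rewrite /Kop; under eq_bigr => i _ do rewrite ff_incr.
rewrite (bigID (fun i : 'I_n => (j <= i)%N)) /=.
under eq_bigr => i Hi do rewrite Hi.
under [X in _ + X + _]eq_bigr => i Hi do rewrite (negbTE Hi).
rewrite [\sum_(i < n) pp v A q x i](bigID (fun i : 'I_n => (j <= i)%N)) /=.
have E1 : \sum_(i < n | (j <= i)%N) pp v A q x i * (ff x * (1 + aa / (L0 + (mN x)%:R)))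
   = (\sum_(i < n | (j <= i)%N) pp v A q x i) * (ff x * (1 + aa / (L0 + (mN x)%:R))).
  by rewrite big_distrl.
have E2 : \sum_(i < n | ~~ (j <= i)%N) pp v A q x i * (ff x * (1 - rr / (H0 + (kN x)%:R)))
   = (\sum_(i < n | ~~ (j <= i)%N) pp v A q x i) * (ff x * (1 - rr / (H0 + (kN x)%:R))).
  by rewrite big_distrl.
rewrite E1 E2 sum_low sum_high -ccE.
by field; rewrite (lt0r_neq0 sp) (lt0r_neq0 H) (lt0r_neq0 L).
Qed.

Definition al := L0 + aa.
Definition be := H0 - rr.

Lemma al_gt0 : 0 < al.
Proof. by apply: addr_gt0; [exact: L0_gt0|exact: aa_gt0]. Qed.

Lemma be_gt0 : 0 < be.
Proof. by rewrite /be subr_gt0; exact: lt_le_trans rr_lt_aa aa_le_H0. Qed.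

Lemma lnPhi_lo m : aa * (ln (al + m%:R) - ln al) <= ln (Phi m).
Proof.
rewrite /Phi (@ln_prod _ (fun i : nat => 1 + aa / (L0 + i%:R))); last by move=> i; exact: Phi_fact_gt0.
apply: (le_trans (ler_wpM2l (ltW aa_gt0) (harm_lo m al_gt0))).
rewrite big_distrr /=; apply: ler_sum => i _.
have -> : al + i%:R = (L0 + i%:R) + aa by rewrite /al; ring.
apply: ln_lo1; first exact: aa_gt0.
by apply: ltr_wpDr; [exact: ler0n|exact: L0_gt0].
Qed.

Lemma lnGam_lo k : - (rr * (ln (be + k%:R) - ln be + be^-1)) <= ln (Gam k).
Proof.
rewrite /Gam (@ln_prod _ (fun i : nat => 1 - rr / (H0 + i%:R))); last by move=> i; exact: Gam_fact_gt0.
apply: (@le_trans _ _ (- (rr * \sum_(i < k) (be + i%:R)^-1))).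
  rewrite lerN2; apply: ler_wpM2l; first exact: rr_ge0.
  apply: (le_trans (harm_up k be_gt0)); rewrite gerBl invr_ge0.
  by apply: addr_ge0; [exact: ltW be_gt0|exact: ler0n].
rewrite big_distrr /= -sumrN; apply: ler_sum => i _.
have -> : be + i%:R = (H0 + i%:R) - rr by rewrite /be; ring.
apply: ln_lo2; first exact: rr_ge0.
apply: (lt_le_trans rr_lt_aa); apply: (le_trans aa_le_H0); rewrite lerDl; exact: ler0n.
Qed.

Lemma share_eq x : @low_share R n j x = (mN x)%:R / ((mN x)%:R + (kN x)%:R).
Proof.
rewrite /low_share /mN /kN -!natr_sum -natrD.
by rewrite [in X in _ / X](bigID (fun i : 'I_n => (j <= i)%N)).
Qed.

Lemma conv eta : 0 < eta -> exists2 d, 0 < d & forall x, ff x < d -> @low_share R n j x < eta.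
Proof.
move=> e0.
pose B := be / al + eta^-1.
have B0 : 0 < B by apply: addr_gt0; [exact: divr_gt0 be_gt0 al_gt0|rewrite invr_gt0].
pose Cst := (aa - rr) * ln al - aa * ln al - rr * ln B + rr * ln be - rr * be^-1.
exists (expR Cst); first exact: expR_gt0.
move=> x fx; rewrite ltNge; apply/negP => Hs; move: fx; apply/negP; rewrite -leNgt.
rewrite share_eq in Hs.
set m := (mN x)%:R in Hs *; set k := (kN x)%:R in Hs *.
have m0 : 0 <= m by exact: ler0n.
have k0 : 0 <= k by exact: ler0n.
have mk : 0 < m + k.
  rewrite lt_def; apply/andP; split; last exact: addr_ge0.
  apply/eqP => E; move: Hs; rewrite E invr0 mulr0 leNgt e0 //.
have hB := ar_share e0 al_gt0 (ltW be_gt0) m0 mk Hs.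
have p1 : 0 < be + k by apply: ltr_wpDr => //; exact: be_gt0.
have p2 : 0 < al + m by apply: ltr_wpDr => //; exact: al_gt0.
have hL : ln (be + k) <= ln B + ln (al + m).
  rewrite -lnM ?posrE //; rewrite ler_ln ?posrE //; exact: mulr_gt0.
have hl : ln al <= ln (al + m).
  rewrite ler_ln ?posrE //; [rewrite lerDl //|exact: al_gt0].
have hc := ar_comb (lB := ln B) rr_ge0 rr_lt_aa (lnPhi_lo (mN x)) (lnGam_lo (kN x)) hL hl.
rewrite -[ff x]lnK; last by rewrite posrE; exact: ff_gt0.
rewrite ler_expR /ff lnM ?posrE; [exact: hc|exact: Phi_gt0|exact: Gam_gt0].
Qed.

End Market.
Section MarketProb.
Context (R : realType) (dT : measure_display) (T : measurableType dT)
  (P : probability T R) (n : nat) (v A q : 'I_n -> R) (j : nat) (qp qm : R)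
  (X : nat -> T -> mstate n).
Hypothesis vpos : forall i, 0 < v i.
Hypothesis Apos : forall i, 0 < A i.
Hypothesis q01 : forall i, 0 <= q i <= 1.
Hypothesis qm0 : 0 <= qm.
Hypothesis qmp : qm < qp.
Hypothesis Hhi : forall i : 'I_n, (i < j)%N -> v i * q i = qp.
Hypothesis Hlo : forall i : 'I_n, (j <= i)%N -> v i * q i = qm.
Variables i0 i1 : 'I_n.
Hypothesis Hi0 : (i0 < j)%N.
Hypothesis Hi1 : (j <= i1)%N.
Hypothesis HX : market_process P v A q X.

Local Notation F := (ff A j qp qm i0).
Local Notation CC := (cc A qp qm i0).
Local Notation Exp := (Exp P X).
Local Notation Kop := (Kop v A q).

Definition Dt (t : nat) := \sum_(k < n) v k * (A k + t%:R).
Definition Bnd (t : nat) := (1 + \sum_(s < t) CC / Dt s)^-1.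

Lemma F_ge0 x : 0 <= F x.
Proof. exact: ltW (ff_gt0 Apos qm0 qmp Hi0 Hi1 x). Qed.

Lemma sx_le_D t x : x \in Reach n t -> sx v A x <= Dt t.
Proof.
move=> xR; apply: ler_sum => k _; apply: ler_wpM2l; first exact: ltW (vpos k).
by rewrite lerD2l ler_nat; exact: Reach_bound.
Qed.

Lemma CC_ge0 : 0 <= CC.
Proof. exact: ltW (cc_gt0 Apos qmp i0). Qed.

Lemma CC_le_D t : CC <= Dt t.
Proof.
rewrite /cc /aa; apply: (le_trans (ar_cc_le (Apos i0) qm0 qmp)).
rewrite -(Hhi Hi0); apply: (@le_trans _ _ (v i0 * (A i0 + t%:R))).
  by case/andP: (q01 i0) => h1 h2; apply: ar_Av => //; exact: ler0n.
rewrite /Dt (bigD1 i0) //= lerDl.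
by apply: sumr_ge0 => k _; apply: mulr_ge0; [exact: ltW (vpos k)|apply: addr_ge0; [exact: ltW (Apos k)|exact: ler0n]].
Qed.

Lemma Dt_gt0 t : 0 < Dt t.
Proof. exact: lt_le_trans (cc_gt0 Apos qmp i0) (CC_le_D t). Qed.

Lemma Kf_le t x : x \in Reach n t -> Kop F x <= (1 - CC / Dt t) * F x.
Proof.
move=> xR; rewrite (Kop_ff vpos Apos qm0 qmp Hhi Hlo Hi0 Hi1 x) mulrC.
apply: ler_wpM2r; first exact: F_ge0.
rewrite lerD2l lerN2; apply: ler_wpM2l; first exact: CC_ge0.
rewrite lef_pV2 ?posrE; [exact: sx_le_D|exact: Dt_gt0|exact: sx_gt0 vpos Apos x i0].
Qed.

Lemma Kf x : Kop F x <= F x.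
Proof.
rewrite (Kop_ff vpos Apos qm0 qmp Hhi Hlo Hi0 Hi1 x); apply: ler_piMr; first exact: F_ge0.
rewrite gerBl; apply: divr_ge0; [exact: CC_ge0|exact: sx_ge0].
Qed.

Lemma Exp0 : Exp 0 (@Strue n) F = 1.
Proof.
rewrite /Exp /= big_seq1 CevT /pr HX.2.1 /= mul1r.
have E : forall (Pd : pred 'I_n), (\sum_(i < n | Pd i) (Defs.mzero n) i = 0)%N.
  by move=> Pd; apply: big1 => i _; rewrite /Defs.mzero ffunE.
by rewrite /ff /mN /kN !E /Phi /Gam !big_ord0 mulr1.
Qed.

Lemma decay t : Exp t (@Strue n) F <= Bnd t.
Proof.
elim: t => [|t IH]; first by rewrite Exp0 /Bnd big_ord0 addr0 invr1.
rewrite (Markov HX (@Strue n) F (fun s _ => null_all HX s)).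
apply: (@le_trans _ _ (Exp t (@Strue n) (fun x => (1 - CC / Dt t) * F x))).
  by apply: Exp_le => x xR; rewrite mul1r; exact: Kf_le.
have y0 : 0 <= CC / Dt t by apply: divr_ge0; [exact: CC_ge0|exact: ltW (Dt_gt0 t)].
have y1 : CC / Dt t <= 1 by rewrite ler_pdivrMr ?mul1r; [exact: CC_le_D|exact: Dt_gt0].
rewrite Exp_scale; apply: (le_trans (ler_wpM2l _ IH)); first by rewrite subr_ge0.
rewrite /Bnd big_ord_recr /=; apply: ar_decay => //.
by apply: sumr_ge0 => s _; apply: divr_ge0; [exact: CC_ge0|exact: ltW (Dt_gt0 s)].
Qed.

Lemma Bnd_small d : 0 < d -> exists T0, Bnd T0 <= d.
Proof.
move=> d0.
pose bs := \sum_(k < n) v k.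
pose D0 := \sum_(k < n) v k * A k.
have bs0 : 0 < bs.
  rewrite /bs (bigD1 i0) //=; apply: ltr_wpDr; last exact: vpos.
  by apply: sumr_ge0 => k _; exact: ltW.
have D00 : 0 < D0.
  rewrite /D0 (bigD1 i0) //=; apply: ltr_wpDr; last exact: mulr_gt0.
  by apply: sumr_ge0 => k _; apply: mulr_ge0; exact: ltW.
pose al := D0 / bs.
have al0 : 0 < al by exact: divr_gt0.
have DtE : forall s, CC / Dt s = CC / bs * (al + s%:R)^-1.
  move=> s; have -> : Dt s = bs * (al + s%:R).
    rewrite /Dt /al; under eq_bigr => k _ do rewrite mulrDr.
    rewrite big_split /= -/D0 -big_distrl /= -/bs; field; exact: (lt0r_neq0 bs0).
  by rewrite invfM mulrA.
pose K := ln al + bs / (CC * d).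
have := truncnS_gt (expR K); set T0 := (_).+1 => HT.
exists T0; rewrite /Bnd; apply: ar_small => //.
under eq_bigr => s _ do rewrite DtE.
rewrite -big_distrr /=.
apply: (le_trans _ (ler_wpM2l _ (harm_lo T0 al0))); last first.
  by apply: divr_ge0; [exact: CC_ge0|exact: ltW].
apply: ar_K => //; first exact: cc_gt0 Apos qmp i0.
have hT : K <= ln (al + T0%:R).
  rewrite -[K]expRK ler_ln ?posrE; first last.
  - by apply: ltr_wpDr => //; exact: ler0n.
  - exact: expR_gt0.
  apply: ltW; apply: (lt_le_trans HT); rewrite lerDr; exact: ltW.
move: hT; rewrite /K -lerBrDl.
by [].
Qed.

Definition epsk (k : nat) : R := (k.+1%:R)^-1.
Definition Bad (k : nat) := [set w | forall T0, exists s, (T0 <= s)%N /\ epsk k <= F (X s w)].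

Lemma epsk_gt0 k : 0 < epsk k.
Proof. by rewrite /epsk invr_gt0 ltr0Sn. Qed.

Lemma mBad k : measurable (Bad k).
Proof.
apply: (@measF _ _ (fun T0 => [set w | exists s, (T0 <= s)%N /\ epsk k <= F (X s w)])) => T0.
apply: (@measE _ _ (fun s => [set w | (T0 <= s)%N /\ epsk k <= F (X s w)])) => s.
apply: measA; exact: (mX HX s (fun x => epsk k <= F x)).
Qed.

Lemma PBad_le k T0 : pr P (Bad k) <= Bnd T0 / epsk k.
Proof.
have e0 := epsk_gt0 k.
pose Fs := fun u => Hit X F (epsk k) T0 u.
have mFs : forall u, measurable (Fs u) by move=> u; exact: (mHit HX F (epsk k) T0 u).
have mU : measurable (\bigcup_u Fs u) by exact: bigcupT_measurable.
have nd : nondecreasing_seq Fs.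
  move=> a b ab; apply/subsetPset => w [s [/andP [h1 h2] H]].
  by exists s; split => //; apply/andP; split => //; apply: (leq_trans h2); rewrite leq_add2l.
have Hc := @nondecreasing_cvg_mu _ _ _ P Fs mFs mU nd.
have Hle : (P (\bigcup_u Fs u) <= (Bnd T0 / epsk k)%:E)%E.
  rewrite -(cvg_lim _ Hc) //; apply: lime_le; first exact: cvgP Hc.
  apply: nearW => u /=; rewrite (prE P (mFs u)) lee_fin.
  apply: (le_trans (maximalT vpos Apos q01 HX i0 F_ge0 Kf e0 T0 u)).
  by apply: ler_wpM2r; [rewrite invr_ge0 ltW|exact: decay].
have sub : Bad k `<=` \bigcup_u Fs u.
  move=> w /(_ T0) [s [Ts Hs]]; exists (s - T0)%N => //.
  by exists s; split => //; apply/andP; split => //; rewrite subnKC.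
apply: (le_trans (pr_le P (mBad k) mU sub)).
by rewrite -lee_fin -prE.
Qed.

Lemma PBad k : P (Bad k) = 0%E.
Proof.
rewrite (prE P (mBad k)); congr EFin; apply: ar_pos_real; first exact: pr_ge0.
move=> d d0; have e0 := epsk_gt0 k.
have [T0 HT] := Bnd_small (mulr_gt0 d0 e0).
apply: (le_trans (PBad_le k T0)); by rewrite ler_pdivrMr.
Qed.

Lemma final : {ae P, forall w, (fun t => low_share j (X t w)) @ \oo --> (0 : R)}.
Proof.
have HN : P.-negligible (\bigcup_k Bad k).
  by apply: negligible_bigcup => k; apply/negligibleP; [exact: mBad|exact: PBad].
apply: (negligibleS _ HN) => w /= ncvg.
case: (pselect ((\bigcup_k Bad k) w)) => // HnB; exfalso; apply: ncvg.
apply/cvgrPdist_lt => e e0.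
have [dd dd0 Hd] := conv Apos qm0 qmp Hi0 Hi1 e0.
pose k := Num.truncn (dd^-1).
have Hk : dd^-1 < k.+1%:R := truncnS_gt (dd^-1).
have nB : ~ Bad k w by move=> B; apply: HnB; exists k.
move/existsNP: nB => [T0 HT0].
move/forallNP: HT0 => HT0.
exists T0 => // t /= Ht.
have Ft : F (X t w) < dd.
  have : ~ (epsk k <= F (X t w)) by move=> H; apply: (HT0 t); split.
  move/negP; rewrite -ltNge => H; apply: (lt_trans H).
  rewrite /epsk -[dd]invrK ltf_pV2 ?posrE ?invr_gt0 ?ltr0Sn //.
have Hs := Hd _ Ft.
have s0 : 0 <= @low_share R n j (X t w).
  rewrite (@share_eq R n j (X t w)); apply: divr_ge0; [exact: ler0n|apply: addr_ge0; exact: ler0n].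
by rewrite sub0r normrN ger0_norm.
Qed.

End MarketProb.

Unset Implicit Arguments.

Theorem mainTheorem6 (R : realType) (dT : measure_display) (T : measurableType dT)
  (P : probability T R) (n : nat) (v A q : 'I_n -> R) (j : nat) (qp qm : R)
  (X : nat -> T -> mstate n) :
  (forall i, 0 < v i) -> (forall i, 0 < A i) -> (forall i, 0 <= q i <= 1) ->
  (1 <= j)%N -> (j < n)%N -> 0 <= qm -> qm < qp ->
  (forall i : 'I_n, (i < j)%N -> v i * q i = qp) ->
  (forall i : 'I_n, (j <= i)%N -> v i * q i = qm) ->
  market_process P v A q X ->
  {ae P, forall w, (fun t => low_share j (X t w)) @ \oo --> (0 : R)}.
Proof.
move=> vpos Apos q01 j1 jn qm0 qmp Hhi Hlo HX.
have n0 : (0 < n)%N by lia.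
pose i0 : 'I_n := Ordinal n0.
pose i1 : 'I_n := Ordinal jn.
have Hi0 : (i0 < j)%N by [].
have Hi1 : (j <= i1)%N by rewrite /= leqnn.
exact: (final vpos Apos q01 qm0 qmp Hhi Hlo Hi0 Hi1 HX).
Qed.
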